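(* Let $\mathbb T=\mathbb R/2\pi\mathbb Z$ with normalized Lebesgue measure $dx$, $(B_t)$ a one-dimensional Brownian motion, $(t,x)\mapsto\phi_t(x)$ smooth on $[0,1]\times\mathbb T$, $X_t$ the stochastic flow of diffeomorphisms solving the Stratonovich SDE $dX_t=\partial_x\phi_t(X_t)\circ dB_t$, $X_0(x)=x$, $\rho$ a smooth strictly positive probability density and $\rho_t$ the density of $(X_t)_\#(\rho\,dx)$. Set $\hat\rho_t=1/\big((\int_{\mathbb T}\frac{dx}{\rho_t})\rho_t\big)$, $a_t=\frac{\partial_x^2\phi_t}{\rho_t}(X_t)$, $b_t=\frac{\partial_x(\partial_x^2\phi_t\,\partial_x\phi_t)}{\rho_t}(X_t)$ and, for $f\in L^2(\rho\,dx)$, $$\Lambda(t,f)=-\Big(\int_{\mathbb T}fa_t\rho\,dx\Big)\hat\rho_t(X_t),$$ $$\Theta(t,f)=-\frac12\Big(\int_{\mathbb T}fa_t\rho\,dx\Big)(\hat\rho_t\partial_x^2\phi_t)(X_t)-\frac12\Big(\int_{\mathbb T}fb_t\rho\,dx\Big)\hat\rho_t(X_t)+\frac32\Big(\int_{\mathbb T}fa_t\rho\,dx\Big)\Big(\int_{\mathbb T}\partial_x^2\phi_t\,\hat\rho_t\,dx\Big)\hat\rho_t(X_t).$$ Then for all $t\in[0,1]$ and $f\in L^2(\rho\,dx)$, $$\|\Lambda(t,f)\|_{L^2(\rho dx)}\le\Big(\sup_{t\in[0,1]}\|\partial_x^2\phi_t\|_\infty\Big)\|f\|_{L^2(\rho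 dx)},$$ $$\|\Theta(t,f)\|_{L^2(\rho dx)}\le\Big(2\sup_{t\in[0,1]}\|\partial_x^2\phi_t\|_\infty^2+\sup_{t\in[0,1]}\|\partial_x(\partial_x^2\phi_t\,\partial_x\phi_t)\|_\infty\Big)\|f\|_{L^2(\rho dx)}.$$ *)

(* Defs.v *)
From HB Require Import structures.
From mathcomp Require Import all_boot all_order all_algebra.
From mathcomp Require Import all_classical all_reals all_analysis.
Set Implicit Arguments. Unset Strict Implicit. Unset Printing Implicit Defensive.
Import Order.TTheory GRing.Theory Num.Theory.
Import numFieldNormedType.Exports.
Local Open Scope classical_set_scope.
Local Open Scope ring_scope.

Section Torus.
Variable R : realType.

(* functions on T = R/2piZ are represented by their 2pi-periodic2pi lifts *)
Definition periodic2pi (g : R -> R) := forall x, g (x + 2 * pi) = g x.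

Definition Tdom : set R := `[0, 2 * pi[%classic.

Definition Tintegral (g : R -> R) : \bar R :=
  ((2 * pi)^-1)%:E * (\int[lebesgue_measure]_(x in Tdom) (g x)%:E)%E.

Definition Tint (g : R -> R) : R := fine (Tintegral g).

Definition L2sq (rho g : R -> R) : \bar R := Tintegral (fun x => g x ^+ 2 * rho x).

Definition L2norm (rho g : R -> R) : R := Num.sqrt (fine (L2sq rho g)).

Definition inL2 (rho f : R -> R) :=
  measurable_fun Tdom f /\ (L2sq rho f < +oo)%E.

Definition smooth1 (g : R -> R) :=
  forall n x, derivable (iter n (@derive1 R R) g) x 1.

Definition pdx (F : R -> R -> R) : R -> R -> R :=
  fun t x => derive1 (fun y => F t y) x.
Definition pdt (F : R -> R -> R) : R -> R -> R :=
  fun t x => derive1 (fun s => F s x) t.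

Fixpoint Ck2 (k : nat) (F : R -> R -> R) : Prop :=
  match k with
  | 0 => continuous (fun p : R * R => F p.1 p.2)
  | k'.+1 => continuous (fun p : R * R => F p.1 p.2) /\
     (forall t x, derivable (fun y => F t y) x 1 /\ derivable (fun s => F s x) t 1)
     /\ Ck2 k' (pdx F) /\ Ck2 k' (pdt F)
  end.

Definition smooth2 (F : R -> R -> R) := forall k, Ck2 k F.

(* orientation-preserving diffeomorphism of T isotopic to the identity,
   given by its lift to R *)
Definition Tdiffeo (X : R -> R) :=
  smooth1 X /\ (forall x, X (x + 2 * pi) = X x + 2 * pi) /\
  (forall x, 0 < derive1 X x).

(* rhot is the density (w.r.t. dx/(2pi)) of the pushforward X_# (rho dx) *)
Definition pushforward_density (X rho rhot : R -> R) :=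
  forall g : R -> R, measurable_fun setT g -> periodic2pi g -> (forall x, 0 <= g x) ->
    Tintegral (fun x => g x * rhot x) = Tintegral (fun x => g (X x) * rho x).

Definition d2x (phi : R -> R -> R) t x := pdx (pdx phi) t x.

Definition supnorm01 (G : R -> R -> R) : R :=
  sup [set r | exists t x, 0 <= t <= 1 /\ r = `|G t x|].

Definition rhohat (rhot : R -> R) : R -> R :=
  fun y => 1 / (Tint (fun x => (rhot x)^-1) * rhot y).

Definition a_fun (phi : R -> R -> R) (t : R) (X rhot : R -> R) : R -> R :=
  fun x => d2x phi t (X x) / rhot (X x).
Definition bnum (phi : R -> R -> R) (t : R) : R -> R :=
  fun y => derive1 (fun z => d2x phi t z * pdx phi t z) y.
Definition b_fun (phi : R -> R -> R) (t : R) (X rhot : R -> R) : R -> R :=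
  fun x => bnum phi t (X x) / rhot (X x).

Definition Lambda phi t X rho rhot (f : R -> R) : R -> R :=
  fun x => - (Tint (fun y => f y * a_fun phi t X rhot y * rho y)) * rhohat rhot (X x).

Definition Theta phi t X rho rhot (f : R -> R) : R -> R :=
  fun x =>
    - 2^-1 * Tint (fun y => f y * a_fun phi t X rhot y * rho y)
        * (rhohat rhot (X x) * d2x phi t (X x))
    - 2^-1 * Tint (fun y => f y * b_fun phi t X rhot y * rho y) * rhohat rhot (X x)
    + 3 / 2 * Tint (fun y => f y * a_fun phi t X rhot y * rho y)
        * Tint (fun y => d2x phi t y * rhohat rhot y) * rhohat rhot (X x).

End Torus.

(* Main.v *)
Require Import Defs.
From HB Require Import structures.
From mathcomp Require Import all_boot all_order all_algebra.
From mathcomp Require Import all_classical all_reals all_analysis.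
From mathcomp Require Import ring lra.
From mathcomp Require Import measurable_realfun.
Import Order.TTheory GRing.Theory Num.Theory.
Import numFieldNormedType.Exports.
Local Open Scope classical_set_scope.
Local Open Scope ring_scope.
Section S.
Variable R : realType.

Lemma cont_sec (G : R -> R -> R) t :
  continuous (fun p : R * R => G p.1 p.2) -> continuous (G t).
Proof.
move=> cG x.
apply: (@continuous_comp _ _ _ (fun y : R => (t, y)) (fun p : R*R => G p.1 p.2) x).
  apply: (@cvg_pair _ _ _ (nbhs x) (nbhs t) (nbhs x)).
  exact: cvg_cst. exact: cvg_id.
exact: cG.
Qed.

Lemma derivable_cont (g : R -> R) : (forall x, derivable g x 1) -> continuous g.
Proof.
move=> dg x; have /derivable1_diffP/differentiable_continuous := dg x; exact.
Qed.

Lemma per_int (g : R -> R) : periodic2pi g -> forall (n : int) x,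
  g (x + n%:~R * (2 * pi)) = g x.
Proof.
move=> pg.
have hn : forall (n : nat) x, g (x + n%:R * (2 * pi)) = g x.
  elim=> [|n IH] x; first by rewrite mul0r addr0.
  by rewrite -natr1 mulrDl mul1r addrA pg IH.
case=> n x.
  by rewrite -[(Posz n)%:~R]/(n%:R) hn.
rewrite NegzE mulrNz mulNr.
have := hn n.+1 (x - n.+1%:R * (2 * pi)); rewrite subrK => <-.
done.
Qed.

Lemma bounded2 (G : R -> R -> R) :
  continuous (fun p : R * R => G p.1 p.2) -> (forall s, periodic2pi (G s)) ->
  exists M, forall s x, 0 <= s <= 1 -> `|G s x| <= M.
Proof.
move=> cG pG.
set D := (`[0, 1] `*` `[0, 2 * pi]) : set (R * R).
have cD : compact D by apply: compact_setX; exact: segment_compact.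
have := continuous_compact (continuous_subspaceT cG) cD.
move=> /compact_bounded /pinfty_ex_gt0 [M M0 HM].
exists M => s x s01.
have pi0 : 0 < 2 * pi :> R by rewrite mulr_gt0 ?pi_gt0.
set n := Num.floor (x / (2 * pi)).
have := floor_itv (x / (2 * pi)); rewrite -/n => /andP[h1 h2].
rewrite -(per_int _ (pG s) (- n) x).
apply: (HM (G s (x + (- n)%:~R * (2 * pi)))).
exists (s, x + (- n)%:~R * (2 * pi)) => //.
split => /=.
  by rewrite in_itv /=.
rewrite in_itv /= mulrNz mulNr; apply/andP; split.
  by rewrite subr_ge0 -ler_pdivlMr.
rewrite ltr_pdivrMr // intrD mulrDl mul1r in h2.
lra.
Qed.

Lemma per_derive1 (g : R -> R) : periodic2pi g -> periodic2pi (derive1 g).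
Proof.
move=> pg x; rewrite /derive1.
suff -> : (fun h : R => h^-1 *: (g (h + (x + 2 * pi)) - g (x + 2 * pi))) =
  (fun h => h^-1 *: (g (h + x) - g x)) by [].
by apply/funext => h; rewrite addrA !pg.
Qed.

Lemma per_pdx (F : R -> R -> R) : (forall s, periodic2pi (F s)) ->
  forall s, periodic2pi (pdx F s).
Proof. by move=> pF s; apply: per_derive1; exact: pF. Qed.

Lemma le_supnorm (G : R -> R -> R) :
  (exists M, forall s x, 0 <= s <= 1 -> `|G s x| <= M) ->
  forall s x, 0 <= s <= 1 -> `|G s x| <= supnorm01 G.
Proof.
move=> [M HM] s x s01; apply: sup_upper_bound; last by exists s, x.
split; first by exists `|G s x|, s, x.
by exists M => r [s' [x' [h ->]]]; exact: HM.
Qed.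

Lemma cont_d2x (phi : R -> R -> R) : smooth2 phi -> continuous (fun p : R * R => d2x phi p.1 p.2).
Proof. by move=> /(_ 2%N) [_ [_ [[_ [_ [H _]]] _]]]. Qed.

Lemma cont_pdx (phi : R -> R -> R) : smooth2 phi -> continuous (fun p : R * R => pdx phi p.1 p.2).
Proof. by move=> /(_ 2%N) [_ [_ [[H _] _]]]. Qed.

Lemma bnumE (phi : R -> R -> R) : smooth2 phi -> forall t y,
  bnum phi t y = d2x phi t y * d2x phi t y + pdx phi t y * pdx (d2x phi) t y.
Proof.
move=> /(_ 3%N) [_ [_ [[_ [d1 [[_ [d2 _]] _]]] _]]] t y.
rewrite /bnum derive1E.
have -> : (fun z => d2x phi t z * pdx phi t z) =
   ((fun z => d2x phi t z) * (fun z => pdx phi t z))%R by [].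
rewrite deriveM; [|exact: (d2 t y).1|exact: (d1 t y).1].
rewrite -!derive1E /=.
rewrite /d2x /pdx /= mulrC; congr (_ + _).
Qed.

Lemma cont_bnum (phi : R -> R -> R) : smooth2 phi -> continuous (fun p : R * R => bnum phi p.1 p.2).
Proof.
move=> sp.
have -> : (fun p : R * R => bnum phi p.1 p.2) = (fun p => 
   d2x phi p.1 p.2 * d2x phi p.1 p.2 + pdx phi p.1 p.2 * pdx (d2x phi) p.1 p.2).
  by apply/funext => p; rewrite bnumE.
have c1 := cont_d2x phi sp; have c2 := cont_pdx phi sp.
have c3 : continuous (fun p : R * R => pdx (d2x phi) p.1 p.2).
  by case: (sp 3%N) => [_ [_ [[_ [_ [[_ [_ [H _]]] _]]] _]]].
move=> p.
exact: (continuousD (continuousM (c1 p) (c1 p)) (continuousM (c2 p) (c3 p))).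
Qed.

End S.

Section T.
Variable R : realType.
Local Open Scope ereal_scope.
Local Notation TD := (@Tdom R).

Lemma mTdom : measurable TD.
Proof. exact: measurable_itv. Qed.

Lemma pi2_gt0 : (0 < 2 * pi :> R)%R.
Proof. by rewrite mulr_gt0 ?pi_gt0. Qed.

Lemma T_ge0 (g : R -> R) : (forall x, Tdom x -> 0 <= g x)%R -> 0 <= Tintegral g.
Proof.
move=> g0; rewrite /Tintegral mule_ge0 //.
  by rewrite lee_fin invr_ge0 ltW // pi2_gt0.
by apply: integral_ge0 => x Dx; rewrite lee_fin g0.
Qed.

Lemma T_le (g1 g2 : R -> R) : measurable_fun TD g1 -> measurable_fun TD g2 ->
  (forall x, Tdom x -> 0 <= g1 x)%R -> (forall x, Tdom x -> g1 x <= g2 x)%R ->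
  Tintegral g1 <= Tintegral g2.
Proof.
move=> m1 m2 g10 g12; rewrite /Tintegral lee_wpmul2l //.
  by rewrite lee_fin invr_ge0 ltW // pi2_gt0.
apply: ge0_le_integral => //.
all: try first [exact: mTdom | exact/measurable_realfun.measurable_EFinP | by move=> x Dx; rewrite lee_fin ?g10 ?g12].
Qed.

Lemma T_D (g1 g2 : R -> R) : measurable_fun TD g1 -> measurable_fun TD g2 ->
  (forall x, Tdom x -> 0 <= g1 x)%R -> (forall x, Tdom x -> 0 <= g2 x)%R ->
  Tintegral (fun x => g1 x + g2 x)%R = Tintegral g1 + Tintegral g2.
Proof.
move=> m1 m2 g10 g20; rewrite /Tintegral -ge0_muleDr; last 2 first.
- by apply: integral_ge0 => x Dx; rewrite lee_fin g10.
- by apply: integral_ge0 => x Dx; rewrite lee_fin g20.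
congr (_ * _).
under eq_integral do rewrite EFinD.
apply: ge0_integralD => //.
all: first [exact: mTdom | exact/measurable_realfun.measurable_EFinP | by move=> x Dx; rewrite lee_fin ?g10 ?g20].
Qed.

Lemma T_Z (k : R) (g : R -> R) : (0 <= k)%R -> measurable_fun TD g ->
  (forall x, Tdom x -> 0 <= g x)%R ->
  Tintegral (fun x => k * g x)%R = k%:E * Tintegral g.
Proof.
move=> k0 mg g0; rewrite /Tintegral muleCA; congr (_ * _).
under eq_integral do rewrite EFinM.
apply: ge0_integralZl_EFin => //.
all: first [exact: mTdom | exact/measurable_realfun.measurable_EFinP | by move=> x Dx; rewrite lee_fin ?g0].
Qed.

Lemma T_cst (k : R) : Tintegral (fun _ => k) = k%:E.
Proof.
rewrite /Tintegral.
have -> : \int[lebesgue_measure]_(x in TD) (k%:E) = k%:E * (lebesgue_measure TD).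
  by rewrite -(integral_cst lebesgue_measure mTdom k%:E).
rewrite /Tdom lebesgue_measure_itv /= lte_fin pi2_gt0 /= -EFinD -!EFinM; congr EFin.
by rewrite oppr0 addr0 mulrCA mulVf ?mulr1 // gt_eqF // pi2_gt0.
Qed.

Lemma T_abs (g : R -> R) : measurable_fun TD g ->
  `| Tintegral g | <= Tintegral (fun x => `|g x|%R).
Proof.
move=> mg; rewrite /Tintegral abseM abse_EFin ger0_norm; last first.
  by rewrite invr_ge0 ltW // pi2_gt0.
rewrite lee_wpmul2l //; first by rewrite lee_fin invr_ge0 ltW // pi2_gt0.
under [X in _ <= X]eq_integral do rewrite -abse_EFin.
apply: le_abse_integral; first exact: mTdom.
exact/measurable_realfun.measurable_EFinP.
Qed.


Lemma fin_le (x : \bar R) (H : R) : `|x| <= H%:E -> (`|fine x| <= H)%R.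
Proof. by case: x => [r| |] //=; rewrite abse_EFin lee_fin. Qed.

Lemma mabs (g : R -> R) : measurable_fun TD g -> measurable_fun TD (fun x => `|g x|)%R.
Proof. by move=> mg; apply: measurableT_comp => //; exact: measurable_realfun.normr_measurable. Qed.

Lemma Tint_abs_le (g h : R -> R) (H : R) : measurable_fun TD g -> measurable_fun TD h ->
  (forall x, TD x -> `|g x| <= h x)%R -> Tintegral h = H%:E -> (`|Tint g| <= H)%R.
Proof.
move=> mg mh gh hH; apply: fin_le; rewrite -hH.

apply: le_trans (T_abs _ mg) _.
apply: T_le => //; first exact: mabs.

Qed.

End T.

Section A.
Variable R : realType.
Lemma alg_cs (F G c : R) : (0 <= F)%R -> (0 <= G)%R ->
  (forall l, 0 < l -> `|c| <= 2^-1 * (l * F + l^-1 * G))%R -> (c ^+ 2 <= F * G)%R.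
Proof.
move=> F0 G0 H.
have [c0|c0] := eqVneq c 0; first by rewrite c0 expr0n /= mulr_ge0.
have ac0 : (0 < `|c|)%R by rewrite normr_gt0.
rewrite -real_normK ?num_real //.
set a := `|c| in ac0 H *.
have [F00|Fn0] := eqVneq F 0.
  exfalso.
  have l0 : (0 < G / a + 1)%R by rewrite ltr_wpDl // divr_ge0 // ltW.
  have := H _ l0; rewrite F00 mulr0 add0r.
  set l := (G / a + 1)%R in l0 *.
  have la : l * a = G + a by rewrite /l mulrDl mul1r mulrAC -mulrA mulfV ?gt_eqF // mulr1.
  have lli : l * l^-1 = 1 by rewrite mulfV // gt_eqF.
  set li := l^-1 in lli *.
  move=> hc.
  have : a * l <= 2^-1 * (li * G) * l by rewrite ler_pM2r.
  nra.
have F0' : (0 < F)%R by rewrite lt_def Fn0.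
have := H (a / F)%R (divr_gt0 ac0 F0').
have e1 : a / F * F = a by rewrite -mulrA mulVf ?mulr1 // gt_eqF.
have e2 : (a / F)^-1 * a = F by rewrite invf_div -mulrA mulVf ?mulr1 // gt_eqF.
set li := (a / F)^-1 in e2 *.
rewrite e1 => hc.
have : a * a <= 2^-1 * (a + li * G) * a by rewrite ler_pM2r.
nra.
Qed.

Lemma amgm (l a b : R) : 0 < l -> 2 * a * b <= l * a ^+ 2 + l^-1 * b ^+ 2.
Proof.
move=> l0.
have e : l * a ^+ 2 + l^-1 * b ^+ 2 - 2 * a * b = l^-1 * (l * a - b) ^+ 2.
  by field; rewrite gt_eqF.
rewrite -subr_ge0 e; apply: mulr_ge0; [by rewrite invr_ge0 ltW | exact: sqr_ge0].
Qed.
End A.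

Section CS.
Variable R : realType.
Local Notation TD := (@Tdom R).

Lemma CS (rho f w h : R -> R) (F G : R) :
  measurable_fun TD f -> measurable_fun TD w -> measurable_fun TD rho ->
  measurable_fun TD h -> (forall x, 0 <= rho x) ->
  (forall x, w x ^+ 2 * rho x <= h x) ->
  L2sq rho f = F%:E -> Tintegral h = G%:E ->
  Tint (fun y => f y * w y * rho y) ^+ 2 <= F * G.
Proof.
move=> mf mw mr mh r0 wh LF TG.
have h0 x : 0 <= h x by apply: le_trans (wh x); rewrite mulr_ge0 ?sqr_ge0.
have mf2 : measurable_fun TD (fun x => f x ^+ 2 * rho x).
  by apply: measurable_funM => //; exact: measurable_realfun.measurable_funX.
have F0 : 0 <= F.
  by rewrite -lee_fin -LF; apply: T_ge0 => x _; rewrite mulr_ge0 ?sqr_ge0.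
have G0 : 0 <= G by rewrite -lee_fin -TG; apply: T_ge0 => x _.
apply: alg_cs => // l l0.

apply: (Tint_abs_le _ _ (fun x => 2^-1 * (l * (f x ^+ 2 * rho x) + l^-1 * h x))%R).
- by apply: measurable_funM => //; apply: measurable_funM.
- apply: measurable_funM; first exact: measurable_cst.
  apply: measurable_funD; apply: measurable_funM => //; exact: measurable_cst.
- move=> x _.
  have li : l * l^-1 = 1 by rewrite mulfV // gt_eqF.
  set i := l^-1 in li *.
  have := wh x; have := r0 x; have := amgm _ l `|f x| `|w x| l0.
  rewrite -/i !normrM (ger0_norm (r0 x)) -(real_normK (num_real (f x))) -(real_normK (num_real (w x))).
  have := normr_ge0 (f x); have := normr_ge0 (w x).
  have : 0 < i by rewrite invr_gt0.
  nra.
- have g1m : measurable_fun TD (fun x => l * (f x ^+ 2 * rho x)).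
    by apply: measurable_funM => //; exact: measurable_cst.
  have g2m : measurable_fun TD (fun x => l^-1 * h x).
    by apply: measurable_funM => //; exact: measurable_cst.
  have g1p : forall x, TD x -> 0 <= l * (f x ^+ 2 * rho x).
    by move=> x _; apply: mulr_ge0; [exact: ltW | apply: mulr_ge0; [exact: sqr_ge0|exact: r0]].
  have g2p : forall x, TD x -> 0 <= l^-1 * h x.
    by move=> x _; apply: mulr_ge0; [rewrite invr_ge0; exact: ltW | exact: h0].
  have h2 : (0 <= 2^-1 :> R) by rewrite invr_ge0.
  rewrite (T_Z _ _ _ h2); last first.
  + by move=> x Dx; apply: addr_ge0; [exact: g1p|exact: g2p].
  + exact: measurable_funD.
  rewrite (T_D _ _ _ g1m g2m g1p g2p).
  rewrite (T_Z _ _ _ (ltW l0) mf2); last by move=> x _; apply: mulr_ge0; [exact: sqr_ge0|exact: r0].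
  rewrite (T_Z _ _ _ _ mh); last by move=> x _; exact: h0.
  + by rewrite -[Tintegral _]/(L2sq rho f) LF TG.
  + by rewrite invr_ge0 ltW.
Qed.

End CS.

Section M.
Variable R : realType.
Local Notation TD := (@Tdom R).

Lemma cont_snd (g : R -> R) : continuous g -> continuous (fun p : R * R => g p.2).
Proof.
move=> cg p; apply: (@continuous_comp _ _ _ snd g p); last exact: cg.
exact: cvg_snd.
Qed.

Lemma cm (g : R -> R) : continuous g -> measurable_fun TD g.
Proof.
move=> cg; apply: (measurable_funS _ _ (continuous_measurable_fun cg)) => //.
Qed.

Lemma contM (f g : R -> R) : continuous f -> continuous g -> continuous (fun x => f x * g x).
Proof. by move=> cf cg x; exact: (continuousM (cf x) (cg x)). Qed.

Lemma contV (f : R -> R) : (forall x, f x != 0) -> continuous f -> continuous (fun x => (f x)^-1).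
Proof. by move=> f0 cf x; exact: (continuousV (f0 x) (cf x)). Qed.

Lemma contC (f g : R -> R) : continuous f -> continuous g -> continuous (fun x => g (f x)).
Proof. by move=> cf cg x; apply: (@continuous_comp _ _ _ f g x); [exact: cf|exact: cg]. Qed.

Lemma contK (k : R) : continuous (fun _ : R => k).
Proof. by move=> x; exact: cvg_cst. Qed.

Lemma fin_bounds (x : \bar R) (B : R) : (0 <= x)%E -> (x <= B%:E)%E -> x = (fine x)%:E.
Proof. by case: x. Qed.

Lemma inv_add_ge2 (y : R) : 0 < y -> 2 <= y^-1 + y.
Proof.
move=> y0.
have e : y^-1 + y - 2 = y^-1 * (y - 1) ^+ 2 by field; rewrite gt_eqF.
by rewrite -subr_ge0 e; apply: mulr_ge0; [by rewrite invr_ge0 ltW | exact: sqr_ge0].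
Qed.

Lemma contD (f g : R -> R) : continuous f -> continuous g -> continuous (fun x => f x + g x).
Proof. by move=> cf cg x; exact: (continuousD (cf x) (cg x)). Qed.

Lemma sq_le (x S : R) : `|x| <= S -> x ^+ 2 <= S ^+ 2.
Proof. by move=> h; rewrite -(real_normK (num_real x)); have := normr_ge0 x; nra. Qed.

Lemma le_of_sq (a b : R) : 0 <= b -> a ^+ 2 <= b ^+ 2 -> `|a| <= b.
Proof. by move=> b0; rewrite -(real_normK (num_real a)); have := normr_ge0 a; nra. Qed.

Lemma tri3 (c d D2 e S : R) : `|D2| <= S -> `|e| <= S ->
  `|- 2^-1 * c * D2 - 2^-1 * d + 3 / 2 * c * e| <=
  2^-1 * `|c| * S + 2^-1 * `|d| + 3 / 2 * `|c| * S.
Proof.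
move=> hD he.
apply: le_trans (ler_normD _ _) _.
have h1 : `|- 2^-1 * c * D2 - 2^-1 * d| <= 2^-1 * `|c| * `|D2| + 2^-1 * `|d|.
  apply: le_trans (ler_normB _ _) _.
  have i2 : `|2^-1 : R| = 2^-1 by rewrite ger0_norm // invr_ge0.
  by rewrite !normrM normrN i2.
have h2 : `|3 / 2 * c * e| = 3 / 2 * `|c| * `|e|.
  have i2 : `|2^-1 : R| = 2^-1 by rewrite ger0_norm // invr_ge0.
  have i3 : `|3 : R| = 3 by rewrite ger0_norm.
  by rewrite !normrM i2 i3.
rewrite h2; have := normr_ge0 c; nra.
Qed.

Lemma fin_alg (c d S Sb F K M : R) : 0 <= S -> 0 <= Sb -> 0 <= F -> 0 < K ->
  c ^+ 2 <= F * (S ^+ 2 * K) -> d ^+ 2 <= F * (Sb ^+ 2 * K) ->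
  M = 2^-1 * `|c| * S + 2^-1 * `|d| + 3 / 2 * `|c| * S ->
  M ^+ 2 <= (2 * S ^+ 2 + Sb) ^+ 2 * F * K.
Proof.
move=> S0 Sb0 F0 K0 hc hd ->.
have sFK : Num.sqrt (F * K) ^+ 2 = F * K by rewrite sqr_sqrtr // mulr_ge0 // ltW.
have w0 := sqrtr_ge0 (F * K).
set w := Num.sqrt (F * K) in sFK w0 *.
have uc : `|c| <= S * w.
  apply: le_of_sq; first exact: mulr_ge0.
  by rewrite exprMn sFK; apply: le_trans hc _; rewrite mulrCA lexx.
have ud : `|d| <= Sb * w.
  apply: le_of_sq; first exact: mulr_ge0.
  by rewrite exprMn sFK; apply: le_trans hd _; rewrite mulrCA lexx.
have u1 : `|c| * S <= S * w * S by rewrite ler_wpM2r.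
have u2 : 0 <= Sb * w by rewrite mulr_ge0.
have hM : 2^-1 * `|c| * S + 2^-1 * `|d| + 3 / 2 * `|c| * S <= (2 * S ^+ 2 + Sb) * w.
  have e1 : (2 * S ^+ 2 + Sb) * w = 2 * (S * w * S) + Sb * w by ring.
  have e2 : 2^-1 * `|c| * S + 2^-1 * `|d| + 3 / 2 * `|c| * S = 2 * (`|c| * S) + 2^-1 * `|d|.
    by field.
  rewrite e1 e2; lra.
have M0 : 0 <= 2^-1 * `|c| * S + 2^-1 * `|d| + 3 / 2 * `|c| * S.
  by rewrite !addr_ge0 // !mulr_ge0 // ?invr_ge0 ?divr_ge0.
have nM : `|2^-1 * `|c| * S + 2^-1 * `|d| + 3 / 2 * `|c| * S| <= (2 * S ^+ 2 + Sb) * w.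
  by rewrite ger0_norm.
have := sq_le _ _ nM.
by rewrite exprMn sFK mulrA.
Qed.

End M.

Theorem lemma4p4 (R : realType) (phi : R -> R -> R) (rho : R -> R)
  (t : R) (X rhot : R -> R) (f : R -> R) :
  smooth2 phi -> (forall s, periodic2pi (phi s)) ->
  smooth1 rho -> periodic2pi rho -> (forall x, 0 < rho x) ->
  Tintegral rho = 1%E ->
  0 <= t <= 1 ->
  Tdiffeo X ->
  measurable_fun setT rhot -> continuous rhot -> periodic2pi rhot ->
  (forall x, 0 < rhot x) ->
  pushforward_density X rho rhot ->
  inL2 rho f ->
  (L2sq rho (Lambda phi t X rho rhot f)
     <= ((supnorm01 (d2x phi) * L2norm rho f) ^+ 2)%:E)%E /\
  (L2sq rho (Theta phi t X rho rhot f)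
     <= (((2 * supnorm01 (d2x phi) ^+ 2 + supnorm01 (bnum phi)) * L2norm rho f) ^+ 2)%:E)%E.
Proof.
move=> sphi pphi srho prho rho0 rho1 t01 [sX [pX dX]] mrt crt prt rt0 push [mf Lf].
have cX : continuous X by apply: derivable_cont => x; exact: (sX 0%N x).
have crho : continuous rho by apply: derivable_cont => x; exact: (srho 0%N x).
have rt0' x : rhot x != 0 by rewrite gt_eqF.
have pd1 : forall s, periodic2pi (pdx phi s) by exact: per_pdx.
have pd2 : forall s, periodic2pi (d2x phi s) by exact: per_pdx.
set S := supnorm01 (d2x phi).
have HS : forall s x, 0 <= s <= 1 -> `|d2x phi s x| <= S.
  by apply: le_supnorm; apply: bounded2 => //; exact: cont_d2x.
have S0 : 0 <= S by apply: le_trans (HS 0 0 _); rewrite ?normr_ge0 ?lexx ?ler01.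
set Sb := supnorm01 (bnum phi).
have HSb : forall s x, 0 <= s <= 1 -> `|bnum phi s x| <= Sb.
  apply: le_supnorm; apply: bounded2; first exact: cont_bnum.
  move=> s; apply: per_derive1 => x /=.
  by rewrite (pd2 s x) (pd1 s x).
have Sb0 : 0 <= Sb by apply: le_trans (HSb 0 0 _); rewrite ?normr_ge0 ?lexx ?ler01.
have ci : continuous (fun x => (rhot x)^-1) by exact: contV.
have [B HB] := @bounded2 R (fun (_ : R) y => (rhot y)^-1) (@cont_snd R _ ci)
  (fun s x => congr1 GRing.inv (prt x)).
set K := Tint (fun x => (rhot x)^-1).
have ri0 x : 0 <= (rhot x)^-1 by rewrite invr_ge0 ltW.
have TK : Tintegral (fun x => (rhot x)^-1) = K%:E.
  apply: (@fin_bounds R _ B); first exact: T_ge0.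
  rewrite -T_cst; apply: T_le => //; first exact: (cm _ _ ci).
  move=> x _; have := HB 0 x; rewrite lexx ler01 => /(_ isT).
    by rewrite /= ger0_norm.
have mrtT : measurable_fun (@Tdom R) rhot by exact: (cm _ _ crt).
have mri : measurable_fun (@Tdom R) (fun x => (rhot x)^-1) by exact: (cm _ _ ci).
have T1 : Tintegral rhot = 1%E.
  have := push (fun _ => 1) (measurable_cst _) (fun x => erefl) (fun _ => ler01).
  have e1 : (fun x => 1 * rhot x) = rhot by apply/funext => x; rewrite mul1r.
  have e2 : (fun x => 1 * rho x) = rho by apply/funext => x; rewrite mul1r.
  by rewrite e1 e2 rho1.
have K1 : 1 <= K.
  have h2 : (Tintegral (fun _ : R => 2%R) <= Tintegral (fun x => (rhot x)^-1 + rhot x)%R)%E.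
    apply: T_le => //.
    - exact: (cm _ _ (contD _ _ _ ci crt)).
    - by move=> x _; apply: inv_add_ge2.
  rewrite T_cst (T_D _ _ _ mri mrtT (fun x _ => ri0 x) (fun x _ => ltW (rt0 x))) TK T1 in h2.
  by rewrite -EFinD lee_fin in h2; lra.
have K0 : 0 < K by lra.
set rh := rhohat rhot.
have rhE y : rh y = 1 / (K * rhot y) by [].
have rh0 y : 0 < rh y by rewrite rhE divr_gt0 ?mulr_gt0.
have crh : continuous rh.
  apply: (contM _ (fun _ => 1) (fun y => (K * rhot y)^-1)); first exact: contK.
  apply: contV; first by move=> y; rewrite mulf_neq0 // gt_eqF.
  by apply: contM => //; exact: contK.
have prh : periodic2pi rh by move=> x; rewrite !rhE prt.
have pushE : forall g, continuous g -> periodic2pi g -> (forall x, 0 <= g x) ->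
    Tintegral (fun x => g (X x) * rho x) = Tintegral (fun y => g y * rhot y).
  by move=> g cg pg g0; rewrite (push g (continuous_measurable_fun cg) pg g0).
have mrho : measurable_fun (@Tdom R) rho by exact: (cm _ _ crho).
have rhoX2 : continuous (fun x => rh (X x) ^+ 2).
  by apply: (contM _ (fun x => rh (X x)) (fun x => rh (X x))); apply: contC.
have J : Tintegral (fun x => rh (X x) ^+ 2 * rho x) = (K^-1)%:E.
  rewrite (pushE (fun y => rh y ^+ 2)); last 3 first.
  - by apply: (contM _ rh rh).
  - by move=> x; rewrite prh.
  - by move=> x; exact: sqr_ge0.
  have -> : (fun y => rh y ^+ 2 * rhot y) = (fun y => (K ^+ 2)^-1 * (rhot y)^-1).
    apply/funext => y; rewrite rhE; field.
    by rewrite (rt0' y) gt_eqF.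
  rewrite T_Z //; last by rewrite invr_ge0 sqr_ge0.
  by rewrite TK -EFinM; congr EFin; field; rewrite gt_eqF.
have Ia : Tintegral (fun x => (rhot (X x) ^+ 2)^-1 * rho x) = K%:E.
  rewrite (pushE (fun y => (rhot y ^+ 2)^-1)); last 3 first.
  - by apply: contV; [move=> y; rewrite sqrf_eq0 | apply: (contM _ rhot rhot)].
  - by move=> x; rewrite prt.
  - by move=> x; rewrite invr_ge0 sqr_ge0.
  have -> : (fun y => (rhot y ^+ 2)^-1 * rhot y) = (fun y => (rhot y)^-1).
    by apply/funext => y; field.
  exact: TK.
have cXr : continuous (fun x => (rhot (X x) ^+ 2)^-1 * rho x).
  apply: contM => //; apply: (contC _ X (fun y => (rhot y ^+ 2)^-1)) => //.
  by apply: contV; [move=> y; rewrite sqrf_eq0 | apply: (contM _ rhot rhot)].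
have IS : forall k, 0 <= k ->
    Tintegral (fun x => k * ((rhot (X x) ^+ 2)^-1 * rho x)) = (k * K)%:E.
  move=> k k0; rewrite T_Z // ?Ia //; first exact: (cm _ _ cXr).
  by move=> x _; rewrite mulr_ge0 // ?invr_ge0 ?sqr_ge0 // ltW.
have LF : L2sq rho f = (fine (L2sq rho f))%:E.
  rewrite fineK // ge0_fin_numE //.
  by apply: T_ge0 => x _; rewrite mulr_ge0 ?sqr_ge0 // ltW.
set F := fine (L2sq rho f) in LF.
have F0 : 0 <= F by rewrite -lee_fin -LF; apply: T_ge0 => x _; rewrite mulr_ge0 ?sqr_ge0 // ltW.
have L2nE : L2norm rho f = Num.sqrt F by [].
have cd2 : continuous (d2x phi t) by exact: (cont_sec _ _ t (cont_d2x _ _ sphi)).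
have cbn : continuous (bnum phi t) by exact: (cont_sec _ _ t (cont_bnum _ _ sphi)).
have Hd2 x : `|d2x phi t x| <= S by exact: HS.
have Hbn x : `|bnum phi t x| <= Sb by exact: HSb.
set c := Tint (fun y => f y * a_fun phi t X rhot y * rho y).
have hc : c ^+ 2 <= F * (S ^+ 2 * K).
  apply: (CS _ rho f (a_fun phi t X rhot) (fun x => S ^+ 2 * ((rhot (X x) ^+ 2)^-1 * rho x))) => //.
  - apply: cm; apply: (contC _ X (fun y => d2x phi t y / rhot y)) => //.
    by apply: contM => //; exact: contV.
  - apply: cm; apply: contM => //; exact: contK.
  - by move=> x; exact: ltW.
  - move=> x; rewrite /a_fun expr_div_n mulrA ler_wpM2r ?(ltW (rho0 x)) //.
    rewrite ler_wpM2r ?invr_ge0 ?sqr_ge0 //; exact: sq_le.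
  - exact: IS (sqr_ge0 S).
set d := Tint (fun y => f y * b_fun phi t X rhot y * rho y).
have hd : d ^+ 2 <= F * (Sb ^+ 2 * K).
  apply: (CS _ rho f (b_fun phi t X rhot) (fun x => Sb ^+ 2 * ((rhot (X x) ^+ 2)^-1 * rho x))) => //.
  - apply: cm; apply: (contC _ X (fun y => bnum phi t y / rhot y)) => //.
    by apply: contM => //; exact: contV.
  - apply: cm; apply: contM => //; exact: contK.
  - by move=> x; exact: ltW.
  - move=> x; rewrite /b_fun expr_div_n mulrA ler_wpM2r ?(ltW (rho0 x)) //.
    rewrite ler_wpM2r ?invr_ge0 ?sqr_ge0 //; exact: sq_le.
  - exact: IS (sqr_ge0 Sb).
set e := Tint (fun y => d2x phi t y * rh y).
have he : `|e| <= S.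
  apply: (Tint_abs_le _ _ (fun y => S * rh y)).
  - by apply: cm; apply: contM.
  - by apply: cm; apply: contM => //; exact: contK.
  - move=> x _; rewrite normrM (ger0_norm (ltW (rh0 x))) ler_wpM2r //; exact: ltW.
  - have -> : rh = (fun y => K^-1 * (rhot y)^-1).
      by apply/funext => y; rewrite rhE invfM mul1r.
    rewrite T_Z //; last by move=> x _; rewrite mulr_ge0 // invr_ge0 ltW.
      rewrite T_Z // ?invr_ge0 ?ltW // TK -!EFinM; congr EFin.
      by rewrite mulVf ?mulr1 // gt_eqF.
    by apply: measurable_funM => //; exact: measurable_cst.
have mrhX : measurable_fun (@Tdom R) (fun x => rh (X x) ^+ 2 * rho x).
  by apply: cm; apply: contM.
have rhX0 : forall x, @Tdom R x -> 0 <= rh (X x) ^+ 2 * rho x.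
  by move=> x _; rewrite mulr_ge0 ?sqr_ge0 // ltW.
split.
  rewrite /L2sq.
  have -> : (fun x => Lambda phi t X rho rhot f x ^+ 2 * rho x) =
      (fun x => c ^+ 2 * (rh (X x) ^+ 2 * rho x)).
    by apply/funext => x; rewrite /Lambda -/c -/rh; ring.
  rewrite T_Z ?sqr_ge0 // J -EFinM lee_fin L2nE exprMn sqr_sqrtr // ler_pdivrMr //.
  by apply: le_trans hc _; rewrite mulrCA mulrA lexx.
set M := 2^-1 * `|c| * S + 2^-1 * `|d| + 3 / 2 * `|c| * S.
have Q x : Theta phi t X rho rhot f x =
    rh (X x) * (- 2^-1 * c * d2x phi t (X x) - 2^-1 * d + 3 / 2 * c * e).
  by rewrite /Theta -/c -/d -/e -/rh; ring.
have cTh : continuous (Theta phi t X rho rhot f).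
  have -> : Theta phi t X rho rhot f = (fun x => (fun y =>
     rh y * (- 2^-1 * c * d2x phi t y - 2^-1 * d + 3 / 2 * c * e)) (X x)).
    by apply/funext => x; rewrite Q.
  apply: (contC _ X (fun y => rh y * (- 2^-1 * c * d2x phi t y - 2^-1 * d + 3 / 2 * c * e))) => //.
  apply: contM => //.
  apply: contD; last exact: contK.
  apply: contD; last exact: contK.
  by apply: contM => //; exact: contK.
rewrite /L2sq.
apply: le_trans (T_le _ _ (fun x => M ^+ 2 * (rh (X x) ^+ 2 * rho x)) _ _ _ _) _.
- apply: cm; apply: contM => //.
  by apply: (contM _ (Theta phi t X rho rhot f) (Theta phi t X rho rhot f)).
- by apply: measurable_funM => //; exact: measurable_cst.
- by move=> x _; rewrite mulr_ge0 ?sqr_ge0 // ltW.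
- move=> x _; rewrite Q mulrA [M ^+ 2 * _]mulrC exprMn ler_wpM2r ?(ltW (rho0 x)) //.
  rewrite ler_wpM2l ?sqr_ge0 //; apply: sq_le.
  exact: tri3.
rewrite T_Z //; last by rewrite sqr_ge0.
rewrite J -EFinM lee_fin L2nE exprMn sqr_sqrtr // ler_pdivrMr //.

exact: (fin_alg _ c d S Sb F K M S0 Sb0 F0 K0 hc hd erefl).
Qed.
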